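(* A pair of matrices $(G,H)\in W_n$ belongs to $\Psi(\mathbb{S}^n)$ if and only if $G$ is positive definite. A butterfly in $\mathbb{S}^n$ is determined by a pair $(G,H)\in\Psi(\mathbb{S}^n)$ uniquely up to isometry, and up to replacing some of its vertices with their antipodes.
   Context: $\mathbb{S}^n$ is the unit sphere in $\mathbb{E}^{n+1}$; tangent vectors are regarded as vectors of $\mathbb{E}^{n+1}$. $W_n$ is the space of pairs $(G,H)$ of real $n\times n$ matrices with $G$ symmetric and $g_{pp}=h_{pp}=1$ for all $p$. A butterfly in $\mathbb{S}^n$ consists of non-degenerate $(n-1)$-simplices $\Delta=[\mathbf{a}_1\dots\mathbf{a}_n]$ and $\Delta_p$ (spanned by $\mathbf{b}_p$ and $\mathbf{a}_q$, $q\ne p$), $p=1,\dots,n$, where $\Delta_p$ is attached to $\Delta$ along the face $F_p$ of $\Delta$ opposite $\mathbf{a}_p$. Let $\mathbf{m}$ be a unit normal to $\Delta$, $\mathbf{n}_p$ the unit tangent vector to $\Delta$ orthogonal to $F_p$ pointing into $\Delta$, $\alpha_p$ the sine of the length of the altitude of $\Delta$ from $\mathbf{a}_p$, $\beta_p$ the sine of the length of the altitude of $\Delta_p$ from $\mathbf{b}_p$, and $\mathbf{b}_p^0$ the position of $\mathbf{b}_p$ after rotating $\Delta_p$ about $F_p$ into the great sphere of $\Delta$ on the same side of $F_p$ as $\mathbf{a}_p$. The pair $(G,H)$ of the butterfly: $G$ is the Gram matrix of $\mathbf{n}_1,\dots,\mathbf{n}_n$ and $h_{pq}=\beta_p^{-1}(\mathbf{b}_p^0,\mathbf{n}_q)$.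 Elementary reversions act on $(G,H)$ as follows: the $a_p$-reversion (formally $\alpha_p\mapsto-\alpha_p$, $\mathbf{n}_p\mapsto-\mathbf{n}_p$, $\mathbf{m}\mapsto-\mathbf{m}$) replaces, for all $q\ne p$, $g_{pq}=g_{qp}$ by $-g_{pq}$, $h_{pq}$ by $h_{pq}-2g_{pq}$, $h_{qp}$ by $-h_{qp}$; the $b_p$-reversion (formally $\beta_p\mapsto-\beta_p$) replaces $h_{pq}$ by $2g_{pq}-h_{pq}$ for all $q\ne p$; all other entries are unchanged. $\Psi(\mathbb{S}^n)\subset W_n$ is the set of all pairs obtained by compositions of elementary reversions from pairs of butterflies in $\mathbb{S}^n$. *)

(* Defs.v *)
From mathcomp Require Import all_boot all_order all_algebra reals.
Set Implicit Arguments. Unset Strict Implicit. Unset Printing Implicit Defensive.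
Import Order.TTheory GRing.Theory Num.Theory.
Local Open Scope ring_scope.

Section Butterflies.
Variable R : realType.
Variable n : nat.

(* Points / vectors of E^{n+1} are row vectors of size n.+1. *)
Notation vec := 'rV[R]_(n.+1).

Definition dotv (u v : vec) : R := (u *m v^T) 0 0.

Definition on_sphere (u : vec) : Prop := dotv u u = 1.

Definition in_span (f : 'I_n -> vec) (P : pred 'I_n) (v : vec) : Prop :=
  exists c : 'I_n -> R, v = \sum_(q < n | P q) c q *: f q.

Definition rows_mx (f : 'I_n -> vec) : 'M[R]_(n, n.+1) :=
  \matrix_(i < n, j < n.+1) f i 0 j.

(* vertices of the wing Delta_p: b_p and the a_q, q <> p (b_p at position p) *)
Definition wing (a b : 'I_n -> vec) (p : 'I_n) : 'I_n -> vec :=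
  fun i => if i == p then b p else a i.

(* A (labelled) butterfly in S^n: vertices a_1..a_n of Delta and b_1..b_n;
   all simplices Delta, Delta_p are non-degenerate (vertices linearly
   independent). *)
Definition is_butterfly (a b : 'I_n -> vec) : Prop :=
  [/\ forall p, on_sphere (a p),
      forall p, on_sphere (b p),
      row_free (rows_mx a)
    & forall p, row_free (rows_mx (wing a b p))].

(* v = n_p : unit tangent vector to Delta (i.e. in the linear span of Delta),
   orthogonal to the face F_p, pointing into Delta. *)
Definition inward_normal (a : 'I_n -> vec) (p : 'I_n) (v : vec) : Prop :=
  [/\ in_span a predT v, on_sphere v,
      forall q, q != p -> dotv v (a q) = 0
    & 0 < dotv v (a p)].

(* beta = beta_p : sine of the length of the altitude of Delta_p from b_p, i.e.
   the sine of the spherical distance from b_p to the great sphere through F_p,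
   which is the norm of the component of b_p orthogonal to span{a_q, q <> p}. *)
Definition altitude_sine (a b : 'I_n -> vec) (p : 'I_n) (beta : R) : Prop :=
  exists x : vec,
  [/\ in_span a (fun q => q != p) x,
      forall q, q != p -> dotv (b p - x) (a q) = 0
    & beta = Num.sqrt (dotv (b p - x) (b p - x))].

(* bz = b_p^0 : image of b_p under a rotation of E^{n+1} fixing F_p pointwise
   which brings Delta_p into the great sphere of Delta, on the same side of F_p
   as a_p (the side where the inward normal n_p points). *)
Definition rotated_wing_vertex (a b : 'I_n -> vec) (nv : 'I_n -> vec)
    (p : 'I_n) (bz : vec) : Prop :=
  exists Q : 'M[R]_(n.+1),
  [/\ Q *m Q^T = 1%:M, \det Q = 1,
      forall q, q != p -> a q *m Q = a q,
      bz = b p *m Q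
    & in_span a predT bz /\ 0 < dotv bz (nv p)].

Definition butterfly_pair (a b : 'I_n -> vec) (G H : 'M[R]_n) : Prop :=
  exists (nv bz : 'I_n -> vec) (beta : 'I_n -> R),
  [/\ forall p, inward_normal a p (nv p),
      forall p, altitude_sine a b p (beta p),
      forall p, rotated_wing_vertex a b nv p (bz p),
      G = \matrix_(p < n, q < n) dotv (nv p) (nv q)
    & H = \matrix_(p < n, q < n) ((beta p)^-1 * dotv (bz p) (nv q))].

Definition in_W (G H : 'M[R]_n) : Prop :=
  [/\ G^T = G, forall p, G p p = 1 & forall p, H p p = 1].

Definition a_rev (p : 'I_n) (GH : 'M[R]_n * 'M[R]_n) : 'M[R]_n * 'M[R]_n :=
  let G := GH.1 in let H := GH.2 in
  (\matrix_(i < n, j < n) (if (i == p) (+) (j == p) then - G i j else G i j),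
   \matrix_(i < n, j < n)
     (if (i == p) && (j != p) then H i j - 2 * G i j
      else if (j == p) && (i != p) then - H i j else H i j)).

Definition b_rev (p : 'I_n) (GH : 'M[R]_n * 'M[R]_n) : 'M[R]_n * 'M[R]_n :=
  let G := GH.1 in let H := GH.2 in
  (G, \matrix_(i < n, j < n)
        (if (i == p) && (j != p) then 2 * G i j - H i j else H i j)).

Inductive rev_reach (x : 'M[R]_n * 'M[R]_n) : 'M[R]_n * 'M[R]_n -> Prop :=
  | rev_refl : rev_reach x x
  | rev_a p y : rev_reach x y -> rev_reach x (a_rev p y)
  | rev_b p y : rev_reach x y -> rev_reach x (b_rev p y).

Definition in_Psi (G H : 'M[R]_n) : Prop :=
  exists (a b : 'I_n -> vec) (G0 H0 : 'M[R]_n),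
    [/\ is_butterfly a b, butterfly_pair a b G0 H0 & rev_reach (G0, H0) (G, H)].

Definition posdef (G : 'M[R]_n) : Prop :=
  forall x : 'rV[R]_n, x != 0 -> 0 < (x *m G *m x^T) 0 0.

Definition antipodize (f : 'I_n -> vec) (e : 'I_n -> bool) : 'I_n -> vec :=
  fun p => if e p then - f p else f p.

(* Two labelled butterflies are isometric: there is an isometry of the
   butterflies (as piecewise spherical complexes) matching the labels, i.e.
   each simplex Delta, Delta_p of one is congruent to the corresponding simplex
   of the other, compatibly with the vertex labels (equal vertex Gram data). *)
Definition bf_isometric (a b a' b' : 'I_n -> vec) : Prop :=
  (forall p q, dotv (a p) (a q) = dotv (a' p) (a' q)) /\
  (forall p q, q != p -> dotv (b p) (a q) = dotv (b' p) (a' q)).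

End Butterflies.

(* Main.v *)
Require Import Defs.
From mathcomp Require Import all_boot all_order all_algebra reals.
From mathcomp Require Import ring lra.
Set Implicit Arguments. Unset Strict Implicit. Unset Printing Implicit Defensive.
Import Order.TTheory GRing.Theory Num.Theory.
Local Open Scope ring_scope.

Module MA.

Section Alg.
Variable R : realType.
Variable n : nat.
Implicit Types G H K M : 'M[R]_n.

Definition sgn (b : bool) : R := if b then -1 else 1.
Lemma sgn2 b : sgn b * sgn b = 1.
Proof. by case: b; rewrite /sgn ?mulN1r ?opprK ?mulr1. Qed.

Definition IA G (p q : 'I_n) : R := let K := invmx G in
  Num.sqrt (K p p)^-1 * Num.sqrt (K q q)^-1 * K p q.
Definition IB G H (p q : 'I_n) : R := let K := invmx G in
  Num.sqrt (((H *m K *m H^T) p p)^-1) * (H *m K) p q * Num.sqrt (K q q)^-1.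

Definition WU G H := [/\ G^T = G, G \in unitmx, forall p, G p p = 1 & forall p, H p p = 1].

Definition Sm (p : 'I_n) : 'M[R]_n := diag_mx (\row_i sgn (i == p)).

Lemma diag_conjE (d : 'rV[R]_n) X i j : (diag_mx d *m X *m diag_mx d) i j = d 0 i * X i j * d 0 j.
Proof. by rewrite mul_mx_diag mul_diag_mx !mxE. Qed.

Lemma SmE p X i j : (Sm p *m X *m Sm p) i j = sgn (i == p) * X i j * sgn (j == p).
Proof. by rewrite diag_conjE !mxE. Qed.

Lemma SmSm p : Sm p *m Sm p = 1%:M.
Proof.
apply/matrixP=> i j; rewrite mul_diag_mx !mxE.
by case: (i =P j) => [->|_]; rewrite ?mulr1n ?mulr0n ?mulr0 // sgn2.
Qed.

Lemma SmT p : (Sm p)^T = Sm p.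
Proof. exact: tr_diag_mx. Qed.

Lemma Sm_unit p : Sm p \in unitmx.
Proof. by case: (mulmx1_unit (SmSm p)). Qed.

Lemma inv_uniq K G : K *m G = 1%:M -> invmx G = K.
Proof.
move=> KG; have Gu : G \in unitmx by case: (mulmx1_unit KG).
by rewrite -[invmx G]mul1mx -KG -mulmxA mulmxV // mulmx1.
Qed.

Lemma inv_conj p G : G \in unitmx -> invmx (Sm p *m G *m Sm p) = Sm p *m invmx G *m Sm p.
Proof.
move=> Gu; apply: inv_uniq.
rewrite -!mulmxA (mulmxA (Sm p) (Sm p)) SmSm mul1mx (mulmxA (invmx G)) mulVmx //.
by rewrite mul1mx SmSm.
Qed.

Lemma sgn_mid b x : sgn b * x * sgn b = x.
Proof. by rewrite mulrAC sgn2 mul1r. Qed.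

Lemma Sm_mul p X Y : Sm p *m X *m Sm p *m (Sm p *m Y *m Sm p) = Sm p *m (X *m Y) *m Sm p.
Proof. by rewrite -!mulmxA (mulmxA (Sm p) (Sm p)) SmSm mul1mx. Qed.

Lemma Sm_tr p X : (Sm p *m X *m Sm p)^T = Sm p *m X^T *m Sm p.
Proof. by rewrite !trmx_mul SmT mulmxA. Qed.

Lemma IA_conj p G i j : G \in unitmx ->
  IA (Sm p *m G *m Sm p) i j = sgn (i == p) * sgn (j == p) * IA G i j.
Proof.
move=> Gu; rewrite /IA inv_conj // !SmE !sgn_mid.
ring.
Qed.

Lemma IB_conj p G M i j : G \in unitmx ->
  IB (Sm p *m G *m Sm p) (Sm p *m M *m Sm p) i j = sgn (i == p) * sgn (j == p) * IB G M i j.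
Proof.
move=> Gu; rewrite /IB inv_conj // Sm_mul Sm_tr Sm_mul !SmE !sgn_mid.
ring.
Qed.

Definition Mb (p : 'I_n) G H : 'M[R]_n :=
  \matrix_(i, j) (if i == p then 2 * G i j - H i j else H i j).

Lemma b_rev_E p G H : WU G H -> (b_rev p (G, H)).2 = Mb p G H.
Proof.
case=> _ _ Gd Hd; apply/matrixP=> i j; rewrite !mxE /=.
case: (i =P p) => [->|] //=; case: (j =P p) => [->|] //=.
by rewrite Gd Hd; ring.
Qed.

Lemma a_rev_E1 p G H : (a_rev p (G, H)).1 = Sm p *m G *m Sm p.
Proof.
apply/matrixP=> i j; rewrite SmE !mxE /= /sgn.
by case: (i == p); case: (j == p) => /=; ring.
Qed.

Lemma a_rev_E2 p G H : WU G H -> (a_rev p (G, H)).2 = Sm p *m Mb p G H *m Sm p.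
Proof.
case=> _ _ Gd Hd; apply/matrixP=> i j; rewrite SmE !mxE /= /sgn.
case: (i =P p) => [->|] /=; case: (j =P p) => [->|] /=; rewrite ?eqxx /=;
  try (move=> *; ring).
by rewrite Gd Hd; ring.
Qed.

Lemma entry_row (X Y : 'M[R]_n) i j : (X *m Y) i j = (row i X *m Y) 0 j.
Proof. by rewrite -row_mul !mxE. Qed.

Lemma entry_rowT (X Y : 'M[R]_n) i : (X *m Y^T) i i = (row i X *m (row i Y)^T) 0 0.
Proof. by rewrite !mxE; apply: eq_bigr => k _; rewrite !mxE. Qed.

Lemma row_entry m (X : 'M[R]_(n, m)) i j : X i j = (row i X) 0 j.
Proof. by rewrite mxE. Qed.

Lemma entB m k (A B : 'M[R]_(m, k)) i j : (A - B) i j = A i j - B i j.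
Proof. by rewrite !mxE. Qed.
Lemma entZ m k a (A : 'M[R]_(m, k)) i j : (a *: A) i j = a * A i j.
Proof. by rewrite !mxE. Qed.

Lemma row1_mul m (p : 'I_n) (Y : 'M[R]_(n, m)) : row p 1%:M *m Y = row p Y.
Proof. by rewrite -row_mul mul1mx. Qed.

Lemma mul_row1T (u : 'rV[R]_n) p : (u *m (row p 1%:M)^T) 0 0 = u 0 p.
Proof.
rewrite mxE (bigD1 p) //= !mxE eqxx mulr1 big1 ?addr0 // => k kp.
by rewrite !mxE eq_sym (negbTE kp) mulr0.
Qed.

Lemma row1_mulT (p : 'I_n) (X : 'M[R]_n) : (row p 1%:M *m (row p X)^T) 0 0 = X p p.
Proof. by rewrite row1_mul !mxE. Qed.

Lemma rowMb_p p G H : row p (Mb p G H) = 2 *: row p G - row p H.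
Proof. by apply/rowP=> j; rewrite !mxE eqxx. Qed.

Lemma rowMb_i p G H i : i != p -> row i (Mb p G H) = row i H.
Proof. by move=> ip; apply/rowP=> j; rewrite !mxE (negbTE ip). Qed.

Lemma IB_b p G H i j : WU G H -> i != j -> IB G (Mb p G H) i j = sgn (i == p) * IB G H i j.
Proof.
move=> [GT Gu Gd Hd] ij; rewrite /IB.
set K := invmx G.
have GK : G *m K = 1%:M by rewrite mulmxV.
have KT : K^T = K by rewrite /K trmx_inv GT.
have rK : row p (Mb p G H *m K) = 2 *: row p 1%:M - row p H *m K.
  by rewrite row_mul rowMb_p mulmxBl -scalemxAl -row_mul GK.
case: (i =P p) => [eip|/eqP nip]; last first.
  rewrite /sgn mul1r; congr (Num.sqrt _ * _ * _).
    by rewrite !entry_rowT !row_mul rowMb_i.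
  by rewrite !entry_row rowMb_i.
subst i; rewrite /sgn.
have e1 : (Mb p G H *m K) p j = - (H *m K) p j.
  rewrite (row_entry (Mb p G H *m K)) rK [in RHS]row_entry !mxE (negbTE ij) mulr0n mulr0 sub0r; congr (- _); by apply: eq_bigr => k _; rewrite mxE.
have e2 : (Mb p G H *m K *m (Mb p G H)^T) p p = (H *m K *m H^T) p p.
  rewrite entry_rowT rK rowMb_p linearB /= linearZ /= mulmxBl !mulmxBr.
  rewrite -!scalemxAl -!scalemxAr !entB !entZ.
  have v1 : (row p 1%:M *m (row p G)^T) 0 0 = 1 by rewrite row1_mulT.
  have v2 : (row p 1%:M *m (row p H)^T) 0 0 = 1 by rewrite row1_mulT.
  have v3 : (row p H *m K *m (row p G)^T) 0 0 = 1.
    rewrite -mulmxA -KT -trmx_mul -(row_mul p G K) GK mul_row1T mxE; exact: Hd.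
  rewrite v1 v2 v3 entry_rowT row_mul; ring.
rewrite e1 e2; ring.
Qed.

Lemma WU_a p G H : WU G H -> WU (a_rev p (G, H)).1 (a_rev p (G, H)).2.
Proof.
move=> W; have [GT Gu Gd Hd] := W.
rewrite a_rev_E1; split.
- by rewrite Sm_tr GT.
- by rewrite !unitmx_mul Gu Sm_unit.
- by move=> i; rewrite SmE sgn_mid.
- by move=> i; rewrite !mxE andbN; exact: Hd.
Qed.

Lemma WU_b p G H : WU G H -> WU (b_rev p (G, H)).1 (b_rev p (G, H)).2.
Proof.
move=> [GT Gu Gd Hd]; split => //= i; rewrite !mxE andbN; exact: Hd.
Qed.

Lemma IA_a p G H i j : WU G H ->
  IA (a_rev p (G, H)).1 i j = sgn (i == p) * sgn (j == p) * IA G i j.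
Proof. by case=> _ Gu _ _; rewrite a_rev_E1 IA_conj. Qed.

Lemma IB_a p G H i j : WU G H -> i != j ->
  IB (a_rev p (G, H)).1 (a_rev p (G, H)).2 i j = sgn (j == p) * IB G H i j.
Proof.
move=> W ij; have [_ Gu _ _] := W.
rewrite a_rev_E1 a_rev_E2 // IB_conj // IB_b //.
by rewrite -[RHS]mul1r -(sgn2 (i == p)); ring.
Qed.

Lemma IB_brev p G H i j : WU G H -> i != j ->
  IB (b_rev p (G, H)).1 (b_rev p (G, H)).2 i j = sgn (i == p) * IB G H i j.
Proof. by move=> W ij; rewrite b_rev_E //= IB_b. Qed.

End Alg.

End MA.
Import MA.

Module MB.

Section Geo.
Variable R : realType.
Variable n : nat.
Notation vec := 'rV[R]_(n.+1).
Notation dotv := (@dotv R n).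

Lemma mul_self_ge0 (x : R) : 0 <= x * x.
Proof. by rewrite -expr2 sqr_ge0. Qed.

Lemma dotvC (u v : vec) : dotv u v = dotv v u.
Proof. by rewrite /dotv !mxE; apply: eq_bigr => k _; rewrite !mxE mulrC. Qed.

Lemma dotvDl (u w v : vec) : dotv (u + w) v = dotv u v + dotv w v.
Proof. by rewrite /dotv mulmxDl mxE. Qed.

Lemma dotvNl (u v : vec) : dotv (- u) v = - dotv u v.
Proof. by rewrite /dotv mulNmx mxE. Qed.

Lemma dotvBl (u w v : vec) : dotv (u - w) v = dotv u v - dotv w v.
Proof. by rewrite dotvDl dotvNl. Qed.

Lemma dotvZl a (u v : vec) : dotv (a *: u) v = a * dotv u v.
Proof. by rewrite /dotv -scalemxAl mxE. Qed.

Lemma dotv_suml (I : Type) (r : seq I) (P : pred I) (F : I -> vec) v :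
  dotv (\sum_(i <- r | P i) F i) v = \sum_(i <- r | P i) dotv (F i) v.
Proof.
elim/big_rec2: _ => [|i y1 y2 _ <-]; first by rewrite /dotv mul0mx mxE.
by rewrite dotvDl.
Qed.

Lemma dotv_mulQ (Q : 'M[R]_(n.+1)) (u v : vec) : Q *m Q^T = 1%:M ->
  dotv (u *m Q) (v *m Q) = dotv u v.
Proof. by move=> QQ; rewrite /dotv trmx_mul mulmxA -(mulmxA u) QQ mulmx1. Qed.

Lemma dotv_ge0 (u : vec) : 0 <= dotv u u.
Proof.
rewrite /dotv mxE; apply: sumr_ge0 => k _; rewrite mxE; exact: mul_self_ge0.
Qed.

Lemma dotv_eq0 (u : vec) : dotv u u = 0 -> u = 0.
Proof.
rewrite /dotv mxE => /eqP; rewrite psumr_eq0 => [/allP H|k _]; last first.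
  by rewrite mxE; exact: mul_self_ge0.
apply/rowP=> k; have := H k (mem_index_enum k); rewrite mxE /= mxE.
by rewrite mulf_eq0 orbb => /eqP ->; rewrite ?mxE.
Qed.

Lemma rows_row (f : 'I_n -> vec) p : row p (rows_mx f) = f p.
Proof. by apply/rowP=> j; rewrite !mxE. Qed.

Lemma dotv_row (u : vec) (Y : 'M[R]_(n, n.+1)) q : dotv u (row q Y) = (u *m Y^T) 0 q.
Proof. by rewrite /dotv !mxE; apply: eq_bigr => k _; rewrite !mxE. Qed.

Lemma dotv_rows (f g : 'I_n -> vec) p q :
  dotv (f p) (g q) = (rows_mx f *m (rows_mx g)^T) p q.
Proof. by rewrite -(rows_row g) dotv_row -(rows_row f) -row_mul mxE. Qed.

Lemma in_span_sub (f : 'I_n -> vec) P v : in_span f P v -> (v <= rows_mx f)%MS.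
Proof.
move=> [c ->]; apply: summx_sub => q _; apply: scalemx_sub.
by rewrite -rows_row row_sub.
Qed.


Lemma solve_sqrt (t s : R) : 0 < t -> t * s * t = 1 -> t = Num.sqrt s^-1.
Proof.
move=> tp ts; have t0 : t != 0 by rewrite gt_eqF.
have -> : s^-1 = t ^+ 2.
  have -> : s = (t * t)^-1.
    by apply: (@mulfI _ (t * t)); rewrite ?mulf_neq0 // mulfV ?mulf_neq0 // -ts; ring.
  by rewrite invrK expr2.
by rewrite sqrtr_sqr gtr0_norm.
Qed.

Lemma diagE (d : 'rV[R]_n) i j : diag_mx d i j = d 0 i *+ (i == j).
Proof. by rewrite mxE. Qed.

Lemma diag2E (e d : 'rV[R]_n) X i j :
  (diag_mx e *m X *m diag_mx d) i j = e 0 i * X i j * d 0 j.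
Proof. by rewrite mul_mx_diag mul_diag_mx !mxE. Qed.

Lemma vec_pos (v : vec) : v != 0 -> 0 < dotv v v.
Proof.
move=> v0; rewrite lt_def dotv_ge0 andbT; apply/eqP => /dotv_eq0 h.
by rewrite h eqxx in v0.
Qed.

Section Pair.
Variables (a b nv bz : 'I_n -> vec) (beta : 'I_n -> R) (G H : 'M[R]_n).
Hypothesis au : forall p, on_sphere (a p).
Hypothesis bu : forall p, on_sphere (b p).
Hypothesis Afree : row_free (rows_mx a).
Hypothesis Wfree : forall p, row_free (rows_mx (wing a b p)).
Hypothesis Hnv : forall p, inward_normal a p (nv p).
Hypothesis Halt : forall p, altitude_sine a b p (beta p).
Hypothesis Hrot : forall p, rotated_wing_vertex a b nv p (bz p).
Hypothesis GE0 : G = \matrix_(p < n, q < n) dotv (nv p) (nv q).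
Hypothesis HE0 : H = \matrix_(p < n, q < n) ((beta p)^-1 * dotv (bz p) (nv q)).

Let A := rows_mx a.
Let N := rows_mx nv.
Let d := \row_p dotv (nv p) (a p).
Let di := \row_p (dotv (nv p) (a p))^-1.

Lemma dpos p : 0 < d 0 p.
Proof. by rewrite mxE; case: (Hnv p). Qed.

Lemma NA : N *m A^T = diag_mx d.
Proof.
apply/matrixP=> p q; rewrite -dotv_rows diagE mxE.
case: (p =P q) => [->|/eqP pq]; first by rewrite mulr1n.
by case: (Hnv p) => _ _ H0 _; rewrite H0 // eq_sym.
Qed.

Lemma DDi : diag_mx d *m diag_mx di = 1%:M.
Proof.
apply/matrixP=> p q; rewrite mul_diag_mx !mxE.
case: (p =P q) => [->|_]; rewrite ?mulr1n ?mulr0n ?mulr0 //.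
by rewrite mulfV // gt_eqF //; case: (Hnv q).
Qed.

Lemma DiD : diag_mx di *m diag_mx d = 1%:M.
Proof. exact: mulmx1C DDi. Qed.

Lemma NsubA : (N <= A)%MS.
Proof.
apply/row_subP => p; rewrite /N rows_row.
have [h _ _ _] := Hnv p; exact: in_span_sub h.
Qed.

Definition Cm := pinvmx A.

Lemma GE : G = N *m N^T.
Proof. by rewrite GE0; apply/matrixP=> p q; rewrite mxE dotv_rows. Qed.

Lemma Xex : exists X : 'M[R]_n, A = X *m N /\ G *m X^T = diag_mx d.
Proof.
have [C NC] := submxP NsubA.
have Cu : C \in unitmx.
  have h : C *m (A *m A^T *m diag_mx di) = 1%:M.
    by rewrite !mulmxA -NC NA DDi.
  by case: (mulmx1_unit h).
exists (invmx C); have AX : A = invmx C *m N by rewrite NC mulmxA mulVmx // mul1mx.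
split => //; rewrite GE -mulmxA -trmx_mul -AX NA //.
Qed.

Lemma Gu : G \in unitmx.
Proof.
have [X [AX GX]] := Xex.
have h : G *m (X^T *m diag_mx di) = 1%:M by rewrite mulmxA GX DDi.
by case: (mulmx1_unit h).
Qed.

Lemma GT : G^T = G.
Proof. by rewrite GE trmx_mul trmxK. Qed.

Lemma KT : (invmx G)^T = invmx G.
Proof. by rewrite trmx_inv GT. Qed.

Lemma AAT : A *m A^T = diag_mx d *m invmx G *m diag_mx d.
Proof.
have [X [AX GX]] := Xex.
have XT : X^T = invmx G *m diag_mx d by rewrite -GX mulKmx // Gu.
have XE : X = diag_mx d *m invmx G.
  by rewrite -[X]trmxK XT trmx_mul tr_diag_mx KT.
rewrite AX trmx_mul -mulmxA (mulmxA N) -GE GX XE //.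
Qed.

Lemma dE p : d 0 p = Num.sqrt ((invmx G) p p)^-1.
Proof.
apply: solve_sqrt; first exact: dpos.
by have := au p; rewrite /on_sphere dotv_rows -/A AAT diag_conjE.
Qed.

Lemma aa_IA p q : dotv (a p) (a q) = IA G p q.
Proof.
rewrite dotv_rows -/A AAT diag_conjE /IA -!dE; ring.
Qed.

Lemma Gd p : G p p = 1.
Proof. by rewrite GE0 mxE; case: (Hnv p). Qed.

Lemma G_posdef : posdef G.
Proof.
move=> x x0; have xN : x *m N != 0.
  apply: contraNneq x0 => h.
  by rewrite -[x]mulmx1 -DDi mulmxA -NA mulmxA h !mul0mx.
have := vec_pos xN; rewrite /dotv GE trmx_mul !mulmxA //.
Qed.

Lemma beta_pos p : 0 < beta p.
Proof.
have [x [[c xE] xo be]] := Halt p.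
rewrite be lt_def sqrtr_ge0 andbT sqrtr_eq0 -ltNge lt_def dotv_ge0 andbT.
apply/eqP => /dotv_eq0 /eqP; rewrite subr_eq0 => /eqP bx.
pose w : 'rV[R]_n := \row_i (if i == p then 1 else - c i).
have wW : w *m rows_mx (wing a b p) = 0 *m rows_mx (wing a b p).
  rewrite mul0mx mulmx_sum_row (bigD1 p) //= rows_row /wing eqxx mxE eqxx scale1r.
  rewrite bx xE -big_split /= big1 // => i ip.
  by rewrite rows_row /wing (negbTE ip) mxE (negbTE ip) scaleNr addrN.
have := row_free_inj (Wfree p) wW => /rowP /(_ p).
by rewrite !mxE eqxx => /eqP; rewrite oner_eq0.
Qed.

Lemma AsubN : (A <= N)%MS.
Proof. by have [X [-> _]] := Xex; exact: submxMl. Qed.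

Lemma bz_data p : exists Q : 'M[R]_(n.+1),
  [/\ Q *m Q^T = 1%:M, forall q, q != p -> a q *m Q = a q, bz p = b p *m Q,
      in_span a predT (bz p) & 0 < dotv (bz p) (nv p)].
Proof. by have [Q [h1 _ h3 h4 [h5 h6]]] := Hrot p; exists Q. Qed.

Lemma bzbz p : dotv (bz p) (bz p) = 1.
Proof. by have [Q [QQ _ -> _ _]] := bz_data p; rewrite dotv_mulQ //; exact: bu. Qed.

Lemma bza p q : q != p -> dotv (b p) (a q) = dotv (bz p) (a q).
Proof.
move=> qp; have [Q [QQ fx -> _ _]] := bz_data p.
by rewrite -{2}(fx q qp) dotv_mulQ.
Qed.

Lemma nvnv p : dotv (nv p) (nv p) = 1.
Proof. by case: (Hnv p). Qed.

Lemma Hd p : H p p = 1.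
Proof.
have [Q [QQ fx bzE bzs bzpos]] := bz_data p.
have [x [[c xE] xo be]] := Halt p.
have xQ : x *m Q = x.
  rewrite xE mulmx_suml; apply: eq_bigr => q qp; by rewrite -scalemxAl fx.
have yQE : bz p - x = (b p - x) *m Q by rewrite mulmxBl xQ bzE.
have xA : (x <= A)%MS.
  by apply: (@in_span_sub a (fun q => q != p)); exists c.
have ysub : (bz p - x <= N)%MS.
  apply: submx_trans AsubN; rewrite -scaleN1r; apply: addmx_sub.
    exact: in_span_sub bzs.
  exact: scalemx_sub.
have [v vE] := submxP ysub.
have vq : forall q, q != p -> v 0 q = 0.
  move=> q qp.
  have : dotv (bz p - x) (a q) = 0 by rewrite yQE -(fx q qp) dotv_mulQ // xo.
  rewrite -(rows_row a q) dotv_row vE -mulmxA -/N -/A NA mul_mx_diag mxE => /eqP.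
  by rewrite mulf_eq0 => /orP [/eqP //|]; rewrite gt_eqF // dpos.
have yE : bz p - x = v 0 p *: nv p.
  rewrite vE mulmx_sum_row (bigD1 p) //= big1 ?addr0 ?rows_row // => q qp.
  by rewrite vq // scale0r.
have xn : dotv x (nv p) = 0.
  rewrite xE dotv_suml big1 // => q qp; rewrite dotvZl dotvC.
  by case: (Hnv p) => _ _ h _; rewrite h // mulr0.
have bzn : dotv (bz p) (nv p) = v 0 p.
  by rewrite -(subrK x (bz p)) dotvDl xn addr0 yE dotvZl nvnv mulr1.
have bev : beta p = v 0 p.
  rewrite be -(dotv_mulQ (b p - x) (b p - x) QQ) -yQE yE dotvZl dotvC dotvZl nvnv mulr1 -expr2 sqrtr_sqr.
  by rewrite gtr0_norm // -bzn.
rewrite HE0 mxE bzn -bev mulVf // gt_eqF //; exact: beta_pos.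
Qed.

Let Z := rows_mx bz.

Lemma ZNT : Z *m N^T = diag_mx (\row_p beta p) *m H.
Proof.
apply/matrixP=> p q; rewrite -dotv_rows mul_diag_mx !mxE HE0 mxE mulrA mulfV ?mul1r //.
by rewrite gt_eqF // beta_pos.
Qed.

Lemma ZsubN : (Z <= N)%MS.
Proof.
apply: submx_trans AsubN; apply/row_subP => p; rewrite /Z rows_row.
by have [Q [_ _ _ h _]] := bz_data p; exact: in_span_sub h.
Qed.

Lemma betaE p : beta p = Num.sqrt (((H *m invmx G *m H^T) p p)^-1).
Proof.
have [U UE] := submxP ZsubN.
have UE2 : U = diag_mx (\row_p beta p) *m H *m invmx G.
  by rewrite -ZNT UE -(mulmxA U N) -GE mulmxK // Gu.
have ZZ : Z *m Z^T = diag_mx (\row_p beta p) *m (H *m invmx G *m H^T) *m diag_mx (\row_p beta p).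
  rewrite UE trmx_mul -(mulmxA U N) (mulmxA N) -GE UE2 !trmx_mul tr_diag_mx KT.
  rewrite -!mulmxA; do 2 congr (_ *m _).
  by rewrite (mulmxA G) mulmxV ?Gu // mul1mx.
apply: solve_sqrt; first exact: beta_pos.
have := bzbz p; rewrite dotv_rows -/Z ZZ mul_mx_diag mul_diag_mx !mxE.
by [].
Qed.

Lemma ba_IB p q : q != p -> dotv (b p) (a q) = IB G H p q.
Proof.
move=> qp; rewrite bza // dotv_rows -/Z -/A.
have [U UE] := submxP ZsubN.
have UE2 : U = diag_mx (\row_p beta p) *m H *m invmx G.
  by rewrite -ZNT UE -(mulmxA U N) -GE mulmxK // Gu.
have [X [AX _]] := Xex.
rewrite UE -mulmxA NA UE2 -(mulmxA (diag_mx _) H) diag2E /IB -betaE -dE mxE.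
ring.
Qed.

End Pair.

Lemma pair_facts (a b : 'I_n -> vec) G H : is_butterfly a b -> butterfly_pair a b G H ->
  [/\ WU G H, forall p q, dotv (a p) (a q) = IA G p q,
      forall p q, q != p -> dotv (b p) (a q) = IB G H p q & posdef G].
Proof.
move=> [au bu Af Wf] [nv [bz [beta [Hnv Halt Hrot GE0 HE0]]]].
split.
- split.
  + by eapply GT; eauto.
  + by eapply Gu; eauto.
  + by move=> p; eapply Gd; eauto.
  + by move=> p; eapply Hd; eauto.
- by move=> p q; eapply aa_IA; eauto.
- by move=> p q qp; eapply ba_IB; eauto.
- by eapply G_posdef; eauto.
Qed.

End Geo.

End MB.
Import MB.

Module MC.

Section Comb.
Variable R : realType.
Variable n : nat.
Notation vec := 'rV[R]_(n.+1).

Lemma posdef_a p (G H : 'M[R]_n) : posdef G -> posdef (a_rev p (G, H)).1.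
Proof.
move=> pd x x0; rewrite a_rev_E1.
have xS : x *m Sm R p != 0.
  apply: contraNneq x0 => h; by rewrite -[x]mulmx1 -(SmSm R p) mulmxA h mul0mx.
have := pd _ xS; rewrite trmx_mul SmT !mulmxA //.
Qed.

Lemma posdef_reach (x y : 'M[R]_n * 'M[R]_n) : rev_reach x y -> posdef x.1 -> posdef y.1.
Proof.
move=> r; elim: r => [//|p [G H] _ IH pd|p [G H] _ IH pd].
- exact: posdef_a (IH pd).
- exact: IH pd.
Qed.

Definition RS (a b : 'I_n -> vec) (ea eb : 'I_n -> bool) (G H : 'M[R]_n) :=
  [/\ WU G H,
      forall p q, sgn R (ea p) * sgn R (ea q) * dotv (a p) (a q) = IA G p q
    & forall p q, q != p -> sgn R (eb p) * sgn R (ea q) * dotv (b p) (a q) = IB G H p q].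

Definition toggle (e : 'I_n -> bool) (p : 'I_n) : 'I_n -> bool :=
  fun i => if i == p then ~~ e i else e i.

Lemma sgn_toggle e p i : sgn R (toggle e p i) = sgn R (i == p) * sgn R (e i).
Proof. by rewrite /toggle /sgn; case: (i == p); case: (e i) => /=; ring. Qed.

Lemma RS_reach a b (x y : 'M[R]_n * 'M[R]_n) : rev_reach x y ->
  forall ea eb, RS a b ea eb x.1 x.2 -> exists ea' eb', RS a b ea' eb' y.1 y.2.
Proof.
move=> r; elim: r => [|p [G H] _ IH|p [G H] _ IH] ea eb h; first by exists ea, eb.
- have [ea' [eb' [W IAh IBh]]] := IH ea eb h.
  exists (toggle ea' p), eb'; split.
  + exact: WU_a.
  + move=> i j; rewrite IA_a // -IAh !sgn_toggle; ring.
  + move=> i j ji; rewrite IB_a // ?(eq_sym i) // -IBh // !sgn_toggle; ring.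
- have [ea' [eb' [W IAh IBh]]] := IH ea eb h.
  exists ea', (toggle eb' p); split.
  + exact: WU_b.
  + by move=> i j; rewrite -IAh.
  + move=> i j ji; rewrite IB_brev // ?(eq_sym i) // -IBh // !sgn_toggle [p == i]eq_sym; ring.
Qed.

Lemma antipodizeE (f : 'I_n -> vec) e p : antipodize f e p = sgn R (e p) *: f p.
Proof. by rewrite /antipodize /sgn; case: (e p); rewrite ?scaleN1r ?scale1r. Qed.

Lemma dotvZr a0 (u v : vec) : dotv u (a0 *: v) = a0 * dotv u v.
Proof. by rewrite dotvC dotvZl dotvC. Qed.

Lemma sgn_xor x y : sgn R (x (+) y) = sgn R x * sgn R y.
Proof. by rewrite /sgn; case: x; case: y => /=; ring. Qed.

Lemma sgn_cancel2 x y (z : R) : sgn R x * sgn R y * (sgn R x * sgn R y * z) = z.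
Proof.
transitivity ((sgn R x * sgn R x) * (sgn R y * sgn R y) * z); first ring.
by rewrite !sgn2 !mul1r.
Qed.

Lemma part2 (G H : 'M[R]_n) (a b a' b' : 'I_n -> vec) :
     is_butterfly a b -> is_butterfly a' b' ->
     (exists G0 H0, butterfly_pair a b G0 H0 /\ rev_reach (G0, H0) (G, H)) ->
     (exists G1 H1, butterfly_pair a' b' G1 H1 /\ rev_reach (G1, H1) (G, H)) ->
     exists ea eb : 'I_n -> bool,
       bf_isometric (antipodize a ea) (antipodize b eb) a' b'.
Proof.
move=> Ba Ba' [G0 [H0 [P0 r0]]] [G1 [H1 [P1 r1]]].
have [W0 IA0 IB0 _] := pair_facts Ba P0.
have [W1 IA1 IB1 _] := pair_facts Ba' P1.
have S0 : RS a b (fun=> false) (fun=> false) G0 H0.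
  by split => // [p q|p q qp]; rewrite /sgn !mul1r; auto.
have S1 : RS a' b' (fun=> false) (fun=> false) G1 H1.
  by split => // [p q|p q qp]; rewrite /sgn !mul1r; auto.
have [ea [eb [_ A0 B0]]] := RS_reach r0 S0.
have [ea' [eb' [_ A1 B1]]] := RS_reach r1 S1.
exists (fun i => ea i (+) ea' i), (fun i => eb i (+) eb' i); split.
- move=> p q; rewrite !antipodizeE dotvZl dotvZr !sgn_xor.
  transitivity (sgn R (ea' p) * sgn R (ea' q) * (sgn R (ea p) * sgn R (ea q) * dotv (a p) (a q))).
    ring.
  by rewrite A0 /= -A1 sgn_cancel2.
- move=> p q qp; rewrite !antipodizeE dotvZl dotvZr !sgn_xor.
  transitivity (sgn R (eb' p) * sgn R (ea' q) * (sgn R (eb p) * sgn R (ea q) * dotv (b p) (a q))).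
    ring.
  by rewrite B0 //= -B1 // sgn_cancel2.
Qed.

End Comb.

End MC.
Import MC.

Module MD.

Section Chol.
Variable R : realType.

Lemma quad_block m (u : 'M[R]_1) (y : 'rV[R]_m) (A : 'M[R]_1) (Bm : 'M[R]_(1, m)) (D : 'M[R]_m) :
  row_mx u y *m block_mx A Bm Bm^T D *m (row_mx u y)^T =
  u *m A *m u^T + y *m Bm^T *m u^T + (u *m Bm *m y^T + y *m D *m y^T).
Proof.
by rewrite mul_row_block tr_row_mx mul_row_col !mulmxDl.
Qed.

Lemma entD m k (A B : 'M[R]_(m, k)) i j : (A + B) i j = A i j + B i j.
Proof. by rewrite !mxE. Qed.
Lemma entB m k (A B : 'M[R]_(m, k)) i j : (A - B) i j = A i j - B i j.
Proof. by rewrite !mxE. Qed.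
Lemma entZ m k a (A : 'M[R]_(m, k)) i j : (a *: A) i j = a * A i j.
Proof. by rewrite !mxE. Qed.

Lemma e11 (P Q : 'M[R]_1) : (P *m Q) 0 0 = P 0 0 * Q 0 0.
Proof. by rewrite mxE big_ord1. Qed.

Lemma chol m (G : 'M[R]_m) : G^T = G -> posdef G -> exists L : 'M[R]_m, G = L *m L^T.
Proof.
elim: m G => [|m IH] G GT pd.
  by exists 0; apply/matrixP => [[]].
pose G1 : 'M[R]_(1 + m) := G.
pose al := ulsubmx G1 0 0; pose g := ursubmx G1; pose D := drsubmx G1.
have eUL : ulsubmx G1 = al%:M := mx11_scalar _.
have eDL : dlsubmx G1 = g^T by rewrite /g trmx_ursub GT.
have DT : D^T = D by rewrite /D trmx_drsub GT.
have GE : G1 = block_mx al%:M g g^T D by rewrite -eUL -eDL submxK.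
have alpos : 0 < al.
  pose x : 'rV[R]_(1 + m) := row_mx 1%:M 0.
  have x0 : x != 0.
    apply/eqP => /(congr1 lsubmx); rewrite row_mxKl => /matrixP /(_ 0 0).
    by rewrite !mxE /= => /eqP; rewrite oner_eq0.
  have := pd x x0; rewrite -/G1 GE quad_block trmx0 trmx1 !mul0mx !mulmx0 !addr0 mulmx1 mul1mx.
  by rewrite mxE.
have al0 : al != 0 by rewrite gt_eqF.
pose G' := D - al^-1 *: (g^T *m g).
have G'T : G'^T = G'.
  by rewrite /G' linearB /= linearZ /= trmx_mul trmxK DT.
have pd' : posdef G'.
  move=> y y0; pose c := (y *m g^T) 0 0; pose u : 'M[R]_1 := (- (c / al))%:M.
  pose x : 'rV[R]_(1 + m) := row_mx u y.
  have x0 : x != 0.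
    by apply: contraNneq y0 => /(congr1 rsubmx); rewrite row_mxKr => ->; rewrite linear0.
  have := pd x x0; rewrite -/G1 GE quad_block.
  have gy : (g *m y^T) 0 0 = c by rewrite -[g]trmxK -trmx_mul mxE.
  rewrite !entD e11 e11 -/c e11 -(mulmxA u g) e11 gy.
  have -> : (y *m G' *m y^T) 0 0 = (y *m D *m y^T) 0 0 - al^-1 * (c * c).
    rewrite /G' mulmxBr mulmxBl entB -scalemxAr -scalemxAl entZ.
    by rewrite (mulmxA y (g^T)) -(mulmxA (y *m g^T)) e11 -/c gy.
  have -> : u 0 0 = - (c / al) by rewrite mxE mulr1n.
  have -> : (al%:M : 'M[R]_1) 0 0 = al by rewrite mxE mulr1n.
  have -> : u^T 0 0 = - (c / al) by rewrite !mxE mulr1n.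
  suff -> : - (c / al) * al * - (c / al) + c * - (c / al) + (- (c / al) * c + (y *m D *m y^T) 0 0)
     = (y *m D *m y^T) 0 0 - al^-1 * (c * c) by [].
  by field.
have [L' L'E] := IH G' G'T pd'.
pose s := Num.sqrt al.
have s0 : s != 0 by rewrite sqrtr_eq0 -ltNge.
pose L1 : 'M[R]_(1 + m) := block_mx s%:M 0 (s^-1 *: g^T) L'.
exists L1; change (G1 = L1 *m L1^T); rewrite GE /L1 tr_block_mx mulmx_block.
rewrite !trmx0 !mulmx0 !mul0mx !addr0 !tr_scalar_mx linearZ /= trmxK.
have ss : s * s = al by rewrite -expr2 sqr_sqrtr // ltW.
congr block_mx.
- by rewrite -scalar_mxM ss.
- by rewrite mul_scalar_mx scalerA mulfV // scale1r.
- by rewrite mul_mx_scalar scalerA mulfV // scale1r.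
- by rewrite -L'E /G' -scalemxAl -scalemxAr scalerA -ss invfM addrC subrK.
Qed.

End Chol.

End MD.
Import MD.

Module ME.

Section Constr.
Variable R : realType.
Variable n : nat.
Notation vec := 'rV[R]_(n.+1).
Variables (G H : 'M[R]_n).
Hypothesis GT : G^T = G.
Hypothesis Gd : forall p, G p p = 1.
Hypothesis Hd : forall p, H p p = 1.
Hypothesis pd : posdef G.

Lemma dotvRR (X Y : 'M[R]_(n, n.+1)) p q : dotv (row p X) (row q Y) = (X *m Y^T) p q.
Proof. by rewrite dotv_row -row_mul mxE. Qed.

Lemma rows_mx_row (X : 'M[R]_(n, n.+1)) : rows_mx (fun p => row p X) = X.
Proof. by apply/matrixP=> i j; rewrite !mxE. Qed.

Lemma Gu : G \in unitmx.
Proof.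
rewrite -row_free_unit; apply: inj_row_free => v vG; apply/eqP; apply: contraT => v0.
by have := pd v0; rewrite vG mul0mx mxE ltxx.
Qed.

Let K := invmx G.

Lemma KT : K^T = K.
Proof. by rewrite /K trmx_inv GT. Qed.

Lemma GK : G *m K = 1%:M. Proof. by rewrite mulmxV // Gu. Qed.
Lemma KG : K *m G = 1%:M. Proof. by rewrite mulVmx // Gu. Qed.

Lemma Kquad (v : 'rV[R]_n) : v != 0 -> 0 < (v *m K *m v^T) 0 0.
Proof.
move=> v0; have vK0 : v *m K != 0.
  apply: contraNneq v0 => h; by rewrite -[v]mulmx1 -KG mulmxA h mul0mx.
have := pd vK0; rewrite trmx_mul KT -!mulmxA (mulmxA G) GK mul1mx //.
Qed.

Lemma Kpp p : 0 < K p p.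
Proof.
have r0 : row p (1%:M : 'M[R]_n) != 0.
  by apply/eqP => /rowP /(_ p); rewrite !mxE eqxx => /eqP; rewrite oner_eq0.
have := Kquad r0; rewrite row1_mul mul_row1T mxE //.
Qed.

Lemma HKH p : 0 < (H *m K *m H^T) p p.
Proof.
have r0 : row p H != 0.
  by apply/eqP => /rowP /(_ p); rewrite !mxE Hd => /eqP; rewrite oner_eq0.
by have := Kquad r0; rewrite entry_rowT row_mul.
Qed.


Definition Em : 'M[R]_(n, n.+1) := \matrix_(i, j) (if j == widen_ord (leqnSn n) i then 1 else 0).

Lemma EE : Em *m Em^T = 1%:M.
Proof.
apply/matrixP=> i k; rewrite !mxE (bigD1 (widen_ord (leqnSn n) i)) //= big1 ?addr0.
  rewrite !mxE eqxx mul1r; case: (i =P k) => [->|/eqP ik]; first by rewrite eqxx.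
  have -> : (widen_ord (leqnSn n) i == widen_ord (leqnSn n) k) = false.
    by apply/negbTE; apply: contra ik => /eqP [] /val_inj ->.
  done.
by move=> j ji; rewrite !mxE (negbTE ji) mul0r.
Qed.

Variable L : 'M[R]_n.
Hypothesis LE : G = L *m L^T.

Let N := L *m Em.
Let d := \row_p Num.sqrt ((K p p)^-1).
Let di := \row_p (Num.sqrt ((K p p)^-1))^-1.
Let bet := \row_p Num.sqrt (((H *m K *m H^T) p p)^-1).
Let A := diag_mx d *m K *m N.
Let Z := diag_mx bet *m H *m K *m N.

Lemma dpos p : 0 < d 0 p.
Proof. by rewrite mxE sqrtr_gt0 invr_gt0 Kpp. Qed.

Lemma betpos p : 0 < bet 0 p.
Proof. by rewrite mxE sqrtr_gt0 invr_gt0 HKH. Qed.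

Lemma F1 : N *m N^T = G.
Proof. by rewrite /N trmx_mul -mulmxA (mulmxA Em) EE mul1mx LE. Qed.

Lemma DDi : diag_mx d *m diag_mx di = 1%:M.
Proof.
apply/matrixP=> p q; rewrite mul_diag_mx !mxE.
case: (p =P q) => [->|_]; rewrite ?mulr1n ?mulr0n ?mulr0 //.
by rewrite mulfV // gt_eqF // sqrtr_gt0 invr_gt0 Kpp.
Qed.

Lemma DiD : diag_mx di *m diag_mx d = 1%:M.
Proof. exact: mulmx1C DDi. Qed.

Lemma F2 : A *m N^T = diag_mx d.
Proof. by rewrite /A -mulmxA F1 -mulmxA KG mulmx1. Qed.

Lemma F3 : N = G *m diag_mx di *m A.
Proof. by rewrite /A -!mulmxA (mulmxA (diag_mx di)) DiD mul1mx (mulmxA G) GK mul1mx. Qed.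

Lemma F4 : Z *m N^T = diag_mx bet *m H.
Proof. by rewrite /Z -mulmxA F1 -mulmxA KG mulmx1. Qed.

Lemma F5 : Z = diag_mx bet *m H *m diag_mx di *m A.
Proof.
by rewrite /A /Z -!mulmxA (mulmxA (diag_mx di)) DiD mul1mx.
Qed.

Lemma F6 : A *m A^T = diag_mx d *m K *m diag_mx d.
Proof.
have h : A^T = N^T *m K *m diag_mx d by rewrite /A !trmx_mul tr_diag_mx KT mulmxA.
by rewrite h !mulmxA F2.
Qed.


Lemma F7 : Z *m Z^T = diag_mx bet *m (H *m K *m H^T) *m diag_mx bet.
Proof.
have h : Z^T = N^T *m K *m H^T *m diag_mx bet.
  by rewrite /Z !trmx_mul tr_diag_mx KT !mulmxA.
by rewrite h !mulmxA F4.
Qed.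

Lemma sq_unit (k : R) : 0 < k -> Num.sqrt k^-1 * k * Num.sqrt k^-1 = 1.
Proof.
move=> kp; rewrite mulrAC -expr2 sqr_sqrtr ?invr_ge0 ?ltW // mulVf // gt_eqF //.
Qed.

Lemma rowZ p : row p Z = bet 0 p *: row p (H *m K *m N).
Proof. by rewrite /Z -!mulmxA mul_diag_mx; apply/rowP => j; rewrite !mxE. Qed.

Lemma construct : in_Psi G H.
Proof.
pose a p := row p A; pose b p := row p Z; pose nv p := row p N.
have rA : rows_mx a = A by exact: rows_mx_row.
have rZ : rows_mx b = Z by exact: rows_mx_row.
have NA : forall p q, dotv (nv p) (a q) = d 0 p *+ (p == q).
  move=> p q; rewrite dotvRR.
  have -> : N *m A^T = (A *m N^T)^T by rewrite [in RHS]trmx_mul trmxK.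
  by rewrite F2 tr_diag_mx mxE.
have NZ : forall p q, dotv (b p) (nv q) = bet 0 p * H p q.
  by move=> p q; rewrite dotvRR F4 mul_diag_mx mxE.
have An : forall p, in_span a predT (nv p).
  move=> p; exists (fun q => (G *m diag_mx di) p q).
  rewrite /nv {1}F3 row_mul mulmx_sum_row; apply: eq_bigr => q _.
  by rewrite mxE.
exists a, b, G, H; split => //; last exact: rev_refl.
- split.
  + by move=> p; rewrite /on_sphere dotvRR F6 diag2E !mxE sq_unit // Kpp.
  + by move=> p; rewrite /on_sphere dotvRR F7 diag2E /bet mxE sq_unit // HKH.
  + rewrite rA; apply: inj_row_free => v vA.
    by rewrite -[v]mulmx1 -DDi mulmxA -F2 mulmxA vA !mul0mx.
  + move=> p; apply: inj_row_free => v vW.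
    have WN : forall i j, (rows_mx (wing a b p) *m N^T) i j =
        if i == p then bet 0 p * H p j else d 0 i *+ (i == j).
      move=> i j; rewrite -(rows_mx_row N) -dotv_rows /wing.
      case: (i == p); rewrite -/(nv j); first exact: NZ.
      rewrite dotvC NA eq_sym; case: (i =P j) => [->|_] //.
    have key : forall j, \sum_i v 0 i * (if i == p then bet 0 p * H p j else d 0 i *+ (i == j)) = 0.
      move=> j.
      have e : (v *m (rows_mx (wing a b p) *m N^T)) 0 j = 0 by rewrite mulmxA vW mul0mx mxE.
      transitivity ((v *m (rows_mx (wing a b p) *m N^T)) 0 j); last exact: e.
      by rewrite [RHS]mxE; apply: eq_bigr => i _; rewrite WN.
    have vp : v 0 p = 0.
      have := key p; rewrite (bigD1 p) //= eqxx Hd mulr1 big1 ?addr0.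
        by move/eqP; rewrite mulf_eq0 (gt_eqF (betpos p)) orbF => /eqP.
      by move=> i ip; rewrite (negbTE ip) mulr0n mulr0.
    apply/rowP => j; rewrite mxE; case: (j =P p) => [->//|/eqP jp].
    have := key j; rewrite (bigD1 j) //= (negbTE jp) eqxx mulr1n big1 ?addr0.
      by move/eqP; rewrite mulf_eq0 (gt_eqF (dpos j)) orbF => /eqP.
    move=> i ij; case: (i =P p) => [->|_]; first by rewrite vp mul0r.
    by rewrite (negbTE ij) mulr0n mulr0.
- exists nv, b, (fun p => bet 0 p); split.
  + move=> p; split => //.
    * by rewrite /on_sphere dotvRR F1 Gd.
    * by move=> q qp; rewrite NA eq_sym (negbTE qp).
    * by rewrite NA eqxx mulr1n dpos.
  + move=> p; exists (b p - bet 0 p *: nv p); split.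
    * pose c q := bet 0 p * (H p q - G p q) * di 0 q.
      exists c.
      have full : \sum_q c q *: a q = \sum_(q < n | q != p) c q *: a q.
        by rewrite (bigD1 p) //= /c Hd Gd subrr mulr0 mul0r scale0r add0r.
      rewrite -full.
      have -> : \sum_q c q *: a q = (\row_q c q) *m A.
        by rewrite mulmx_sum_row; apply: eq_bigr => q _; rewrite mxE.
      have -> : (\row_q c q) = bet 0 p *: (row p (H - G) *m diag_mx di).
        by apply/rowP => q; rewrite /c mul_mx_diag !mxE mulrA.
      rewrite -scalemxAl /A -!mulmxA (mulmxA (diag_mx di)) DiD mul1mx.
      rewrite !mulmxA -(mulmxA _ L Em) -/N -!row_mul mulmxBl GK mulmxBl mul1mx linearB /= scalerBr /b rowZ. done.
    * move=> q qp; have -> : b p - (b p - bet 0 p *: nv p) = bet 0 p *: nv p.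
        by rewrite opprB addrC subrK.
      by rewrite dotvZl NA eq_sym (negbTE qp) mulr0n mulr0.
    * have -> : b p - (b p - bet 0 p *: nv p) = bet 0 p *: nv p.
        by rewrite opprB addrC subrK.
      rewrite dotvZl dotvZr dotvRR F1 Gd mulr1 -expr2 sqrtr_sqr gtr0_norm //.
      exact: betpos.
  + move=> p; exists 1%:M; split.
    * by rewrite trmx1 mulmx1.
    * exact: det1.
    * by move=> q _; rewrite mulmx1.
    * by rewrite mulmx1.
    * split; last by rewrite NZ Hd mulr1 betpos.
      exists (fun q => (diag_mx bet *m H *m diag_mx di) p q).
      rewrite /b {1}F5 row_mul mulmx_sum_row; apply: eq_bigr => q _.
      by rewrite mxE.
  + by apply/matrixP => p q; rewrite mxE dotvRR F1.
  + apply/matrixP => p q; rewrite mxE NZ mulrA mulVf ?mul1r //.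
    by rewrite gt_eqF // betpos.
Qed.

End Constr.

End ME.
Import ME.

Unset Implicit Arguments.
Theorem mainTheorem12 (R : realType) (n : nat) (hn : (2 <= n)%N) :
  (forall G H : 'M[R]_n, in_W G H -> (in_Psi G H <-> posdef G)) /\
  (forall (G H : 'M[R]_n) (a b a' b' : 'I_n -> 'rV[R]_(n.+1)),
     is_butterfly a b -> is_butterfly a' b' ->
     (exists G0 H0, butterfly_pair a b G0 H0 /\ rev_reach (G0, H0) (G, H)) ->
     (exists G1 H1, butterfly_pair a' b' G1 H1 /\ rev_reach (G1, H1) (G, H)) ->
     exists ea eb : 'I_n -> bool,
       bf_isometric (antipodize a ea) (antipodize b eb) a' b').
Proof.
split.
- move=> G H [GT Gd Hd]; split.
  + move=> [a [b [G0 [H0 [Bab P0 r0]]]]].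
    have [_ _ _ pd0] := pair_facts Bab P0.
    exact: (posdef_reach r0 pd0).
  + move=> pd; have [L LE] := chol GT pd.
    exact: (construct GT Gd Hd pd LE).
- move=> G H a b a' b'; exact: part2.
Qed.
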